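(* Let $\pi$ be an $(m,n)$-parking function with priority forest $P$. Then (a) $\mathrm{lucky}(\pi)=\mathrm{sasc}(P)$, and (b) $\mathrm{probes}(\pi)=\mathrm{diff}(P)$.
   Context: $[n]=\{1,\dots,n\}$, $[n]_0=\{0,\dots,n\}$. An $(m,n)$-parking function is a map $\pi:[m]\to[n]$ such that when cars $1,\dots,m$ arrive in order to spots $1,\dots,n$ and car $i$ parks at the first empty spot $\ge\pi(i)$, all cars park. Its bird's eye permutation $\omega$ sends each occupied spot to the car parked there. Its priority forest $P$ is the rooted forest on $[n]_0$ in which each occupied spot $i$ is a non-root vertex with parent $\pi(\omega(i))-1$ and all other vertices are roots (it is a priority forest). A car is lucky if it parks at its preferred spot; $\mathrm{lucky}(\pi)$ is the number of lucky cars. $\mathrm{probes}(\pi)$ is the total number of parking attempts (successful or not) made by all cars. For a priority forest $P$ with shifted parent map $s_P(i)=p(i)+1$ ($p(i)$ the parent of non-root $i$): $\mathrm{sasc}(P)$ is the number of non-root vertices $i$ whose parent is $i-1$, and $\mathrm{diff}(P)=\sum_i(i-s_P(i)+1)$, summed over non-root vertices $i$. *)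

(* Defs.v *)
From mathcomp Require Import all_boot.
Set Implicit Arguments. Unset Strict Implicit. Unset Printing Implicit Defensive.

(* Conventions: spots are 1..n; vertices of the forest are 0..n.
   A preference list pi : seq nat of size m, pi`_(j) = pi(j+1) (cars 0-indexed
   in the seq, car j+1 of the paper is position j). *)

(* Returns Some (parking spot, number of attempts)
   or None if the car leaves the street. fuel bounds the search. *)
Fixpoint drive (n : nat) (occ : seq nat) (s fuel : nat) : option (nat * nat) :=
  match fuel with
  | 0 => None
  | fuel'.+1 =>
      if n < s then None
      else if s \in occ then
        omap (fun r => (r.1, r.2.+1)) (drive n occ s.+1 fuel')
      else Some (s, 1)
  end.

Fixpoint run (n : nat) (prefs occ : seq nat) : option (seq (nat * nat)) :=
  match prefs with
  | [::] => Some [::]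
  | a :: ps =>
      match drive n occ a n.+1 with
      | None => None
      | Some r => omap (cons r) (run n ps (r.1 :: occ))
      end
  end.

Definition is_parking_function (m n : nat) (pi : seq nat) : Prop :=
  [/\ size pi = m, all (fun a => 0 < a <= n) pi & run n pi [::] <> None].

Definition outcome (n : nat) (pi : seq nat) : seq (nat * nat) :=
  odflt [::] (run n pi [::]).

Definition spots (n : nat) (pi : seq nat) : seq nat := map fst (outcome n pi).

(* bird's eye permutation: occupied spot i |-> (0-indexed) car parked there *)
Definition birds_eye (n : nat) (pi : seq nat) (i : nat) : nat :=
  index i (spots n pi).

(* priority forest on [n]_0, given by its parent map (None = root):
   occupied spot i has parent pi(omega(i)) - 1 *)
Definition priority_forest (n : nat) (pi : seq nat) (i : nat) : option nat :=
  if i \in spots n pi then Some (nth 0 pi (birds_eye n pi i) - 1) else None.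

Definition lucky (n : nat) (pi : seq nat) : nat :=
  count (fun j => (nth (0, 0) (outcome n pi) j).1 == nth 0 pi j) (iota 0 (size pi)).

Definition probes (n : nat) (pi : seq nat) : nat :=
  \sum_(r <- outcome n pi) r.2.

(* statistics of a forest on [n]_0 given by a parent map; s_P(i) = p(i)+1 *)
Definition sasc (n : nat) (par : nat -> option nat) : nat :=
  count (fun i => if par i is Some p then p == i - 1 else false) (iota 0 n.+1).

Definition diff (n : nat) (par : nat -> option nat) : nat :=
  \sum_(i <- iota 0 n.+1)
     (if par i is Some p then (i - p.+1 + 1) else 0).

(* Main.v *)
Require Import Defs.
From mathcomp Require Import all_boot.
From mathcomp Require Import zify.

Lemma drive_inv n occ s f sp k :
  drive n occ s f = Some (sp, k) ->
  sp \notin occ /\ sp + 1 = s + k /\ 0 < k /\ sp <= n.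
Proof.
elim: f s sp k => [|f IH] s sp k //=.
case: ltnP => hs //.
case: ifP => hin.
  case E: (drive n occ s.+1 f) => [[a b]|] //= [<- <-].
  case: (IH _ _ _ E) => ? ?; split => //; lia.
by move=> [<- <-]; rewrite hin; split => //; lia.
Qed.

Arguments drive : simpl never.
Lemma run_inv n ps occ out : uniq occ ->
  run n ps occ = Some out ->
  [/\ size out = size ps, uniq (map fst out ++ occ) &
  (forall j, j < size ps -> let r := nth (0,0) out j in
     r.1 + 1 = nth 0 ps j + r.2 /\ 0 < r.2 /\ r.1 <= n)].
Proof.
elim: ps occ out => [|a ps IH] occ out Uo /=.
  by move=> [<-].
case D: (drive n occ a n.+1) => [[sp k]|] //.
have [h1 [h2 [h3 h4]]] := drive_inv _ _ _ _ _ _ D.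
case R: (run n ps (sp :: occ)) => [out'|] //= [<-].
have Uo' : uniq (sp :: occ) by rewrite /= h1 Uo.
have [s1 s2 s3] := IH _ _ Uo' R.
split => /=.
- by rewrite s1.
- by rewrite -cons_uniq -cat1s (perm_uniq (introT permPl (perm_catCA [:: sp] _ occ))).
- by case=> [|j] /=; [lia| move=> hj; apply: s3].
Qed.

Lemma count_sumE (T : Type) (a : pred T) r : count a r = \sum_(x <- r) (a x : nat).
Proof. by elim: r => [|x r IH]; rewrite ?big_nil ?big_cons //= IH. Qed.

Lemma key n (L : seq nat) (F : nat -> nat -> nat) :
  uniq L -> all (fun x => x <= n) L ->
  \sum_(i <- iota 0 n.+1) (if i \in L then F i (index i L) else 0) =
  \sum_(j <- iota 0 (size L)) F (nth 0 L j) j.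
Proof.
move=> UL AL.
rewrite -big_mkcond /= -big_filter.
have P : perm_eq [seq i <- iota 0 n.+1 | i \in L] L.
  apply: uniq_perm; first by rewrite filter_uniq ?iota_uniq.
    by [].
  move=> x; rewrite mem_filter mem_iota /=.
  case H: (x \in L) => //=.
  by move/allP: AL => /(_ x H); lia.
rewrite (perm_big _ P) /= (big_nth 0) /=.
rewrite /index_iota subn0; apply: eq_big_seq => j.
by rewrite mem_iota /= => hj; rewrite index_uniq.
Qed.

Theorem lemma4p4 (m n : nat) (pi : seq nat) :
  is_parking_function m n pi ->
  lucky n pi = sasc n (priority_forest n pi) /\
  probes n pi = diff n (priority_forest n pi).
Proof.
move=> [Hs Hall Hrun].
case E: (run n pi [::]) => [out|] //.
have [s1 s2 s3] := run_inv n pi [::] out isT E.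
rewrite cats0 in s2.
have Ho : outcome n pi = out by rewrite /outcome E.
have Hsp : spots n pi = map fst out by rewrite /spots Ho.
have AL : all (fun x => x <= n) (map fst out).
  apply/allP => x /mapP [r] /(nthP (0,0)) [j hj <-] ->.
  by have := s3 j; rewrite -s1 => /(_ hj) [_ [_ ?]].
have Hnth : forall j, j < size pi -> nth 0 (map fst out) j = (nth (0,0) out j).1.
  by move=> j hj; rewrite (nth_map (0,0)) // s1.
have Hpos : forall j, j < size pi -> 0 < nth 0 pi j.
  by move=> j hj; move/allP: Hall => /(_ (nth 0 pi j) (mem_nth 0 hj)) /andP[].
split.
- rewrite /lucky /sasc !count_sumE Ho.
  rewrite [in RHS](eq_bigr (fun i => if i \in map fst out then
     nat_of_bool (nth 0 pi (index i (map fst out)) - 1 == i - 1) else 0)); last first.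
    by move=> i _; rewrite /priority_forest /birds_eye Hsp; case: ifP.
  rewrite (key n (map fst out) (fun i k => nat_of_bool (nth 0 pi k - 1 == i - 1))) // size_map s1; apply: eq_big_seq => j; rewrite mem_iota /= => hj.
  rewrite Hnth //.
  have := s3 j hj; have := Hpos j hj.
  set x := nth 0 pi j; set y := (nth (0,0) out j).1; set z := (nth (0,0) out j).2.
  move=> h1 [h2 [h3 h4]].
  suff -> : (x - 1 == y - 1) = (y == x) by [].
  by apply/eqP/eqP; lia.
- rewrite /probes /diff Ho.
  rewrite [in RHS](eq_bigr (fun i => if i \in map fst out then
     (i - (nth 0 pi (index i (map fst out)) - 1).+1 + 1) else 0)); last first.
    by move=> i _; rewrite /priority_forest /birds_eye Hsp; case: ifP.
  rewrite (key n (map fst out) (fun i k => i - (nth 0 pi k - 1).+1 + 1)) // size_map s1 (big_nth (0,0)) /index_iota subn0 s1.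
  apply: eq_big_seq => j; rewrite mem_iota /= => hj.
  rewrite Hnth //.
  have := s3 j hj; have := Hpos j hj.
  set x := nth 0 pi j; set y := (nth (0,0) out j).1; set z := (nth (0,0) out j).2.
  move=> h1 [h2 [h3 h4]].
  lia.
Qed.
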